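(* Consider $v$ CRs whose per-segment sub-Nyquist sample numbers $M_1,\dots,M_v$ are distinct consecutive primes with $M_iM_j>N$ for all $i\ne j$, and suppose the Nyquist spectrum is $s$-sparse (at most $s$ occupied bins, forming the support $\Omega\subseteq\{0,\dots,N-1\}$). Fix a bin $k$ and threshold $\lambda_k>0$, and use the decision rule: declare $\mathcal H_{1,k}$ iff $\widehat{E_s}[k]>\lambda_k$. Assume the following model for the test statistic: under $\mathcal H_{0,k}$ (bin $k$ unoccupied), $\widehat{E_s}[k]\sim\chi^2_{2Jv}\big(\tfrac{2}{N}\sum_{i\in\Upsilon_k}M_i\gamma_i[k]\big)$, and under $\mathcal H_{1,k}$ (bin $k$ occupied), $\widehat{E_s}[k]\sim\chi^2_{2Jv}(\mu)$ for some $\mu\ge \tfrac{2}{N}\sum_{i=1}^{v}M_i\gamma_i[k]$. Then $|\Upsilon_k|\le s$, and for any set $\Upsilon\supseteq \Upsilon_k$ of $s$ CRs, the probability of false alarm $P_{f,k}=\Pr(\widehat{E_s}[k]>\lambda_k\mid\mathcal H_{0,k})$ and probability of detection $P_{d,k}=\Pr(\widehat{E_s}[k]>\lambda_k\mid\mathcal H_{1,k})$ satisfy $$\frac{\Gamma(Jv,\lambda_k/2)}{\Gamma(Jv)}\le P_{f,k}\le Q_{Jv}\Big(\sqrt{\tfrac{2}{N}\textstyle\sum_{i\in\Upsilon}M_i\gamma_i[k]},\sqrt{\lambda_k}\Big),\qquad P_{d,k}\ge Q_{Jv}\Big(\sqrt{\tfrac{2}{N}\textstyle\sum_{i=1}^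{v}M_i\gamma_i[k]},\sqrt{\lambda_k}\Big).$$
   Context: Multi-rate sub-Nyquist spectrum sensing: $v$ CRs observe a signal over time $T$; Nyquist sampling would give $JN$ samples split into $J$ segments of $N$ samples. CR $i$ samples at a sub-Nyquist rate giving $JM_i$ samples, split into $J$ segments of $M_i$ samples; $Y_{i,j}[m]$ ($m=0,\dots,M_i-1$) is the DFT of segment $j$ at CR $i$, $E_{s,i}[m]=\sum_{j=1}^J|Y_{i,j}[m]|^2$, and the fusion-center test statistic is $\widehat{E_s}[k]=\sum_{i=1}^v \frac{N}{M_i}E_{s,i}[k \bmod M_i]$, $k=0,\dots,N-1$. $\gamma_i[k]\ge0$ denotes the SNR at CR $i$ associated with bin $k$ (for an unoccupied bin, the SNR of the occupied component aliased onto it). $\Upsilon_k$ is the set of CRs $i$ for which $k$ is an aliased frequency, i.e. $k\notin\Omega$ and $k\equiv k'\pmod{M_i}$ for some $k'\in\Omega$. $\chi^2_{d}(\mu)$ is the noncentral chi-square distribution with $d$ degrees of freedom and noncentrality parameter $\mu$ ($\chi^2_d(0)$ central). $\Gamma(a)$ is the gamma function, $\Gamma(a,x)$ the upper incomplete gamma function, and $Q_u(a,x)=\frac{1}{a^{u-1}}\int_x^\infty t^u e^{-(a^2+t^2)/2}I_{u-1}(at)\,dt$ the generalized Marcum Q-function, $I_\nu$ the modified Bessel function of the first kind. *)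

(* Defs.v *)
From Stdlib Require Import Reals Lra Lia Arith List ZArith Znumtheory.
From Stdlib Require Import Classical ClassicalEpsilon.
Import ListNotations.
Open Scope R_scope.

Definition improper_int (g : R -> R) (a l : R) : Prop :=
  (forall b, a <= b -> inhabited (Riemann_integrable g a b)) /\
  (forall eps, 0 < eps -> exists B, forall b (pr : Riemann_integrable g a b),
      B <= b -> Rabs (RiemannInt pr - l) < eps).

Definition ImpInt (g : R -> R) (a : R) : R :=
  epsilon (inhabits 0) (fun l => improper_int g a l).

Definition series_value (f : nat -> R) : R :=
  epsilon (inhabits 0) (fun l => infinite_sum f l).

Definition besselI (n : nat) (z : R) : R :=
  series_value (fun k => (z / 2) ^ (2 * k + n) / (INR (fact k) * INR (fact (k + n)))).

Definition upper_gamma (a : nat) (x : R) : R :=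
  ImpInt (fun t => t ^ (a - 1) * exp (- t)) x.
Definition Gamma_fn (a : nat) : R := upper_gamma a 0.

(** Generalized Marcum Q-function Q_u(a,x) (paper's integral formula for a > 0;
    for a = 0 its limiting value Gamma(u, x^2/2)/Gamma(u)). *)
Definition marcumQ (u : nat) (a x : R) : R :=
  if Rlt_dec 0 a then
    / a ^ (u - 1) *
    ImpInt (fun t => t ^ u * exp (- (a ^ 2 + t ^ 2) / 2) * besselI (u - 1) (a * t)) x
  else upper_gamma u (x ^ 2 / 2) / Gamma_fn u.

(** Density of the noncentral chi-square distribution chi^2_{2m}(mu)
    (2m degrees of freedom, noncentrality mu >= 0). *)
Definition chi2_pdf (m : nat) (mu x : R) : R :=
  if Rle_dec x 0 then 0 else
  if Rlt_dec 0 mu then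
    / 2 * exp (- (x + mu) / 2) * (sqrt (x / mu)) ^ (m - 1) * besselI (m - 1) (sqrt (mu * x))
  else x ^ (m - 1) * exp (- x / 2) / (2 ^ m * INR (fact (m - 1))).

Definition chi2_tail (m : nat) (mu lam : R) : R := ImpInt (chi2_pdf m mu) lam.

Definition sumR (f : nat -> R) (l : list nat) : R :=
  fold_right (fun i acc => f i + acc) 0 l.

(** CRs are indexed 0..v-1.  Upsilon_k = CRs i for which k is an aliased
    frequency: k notin Omega and k = k' mod M_i for some k' in Omega. *)
Definition Upsilon (v : nat) (M : nat -> nat) (Omega : list nat) (k : nat) : list nat :=
  filter (fun i => negb (existsb (Nat.eqb k) Omega) &&
                   existsb (fun k' => Nat.eqb (k mod M i) (k' mod M i)) Omega)%bool
         (seq 0 v).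

Definition consecutive_primes (v : nat) (M : nat -> nat) : Prop :=
  (forall i, (i < v)%nat -> prime (Z.of_nat (M i))) /\
  (forall i, (i + 1 < v)%nat ->
     (M i < M (i + 1))%nat /\
     forall p, (M i < p < M (i + 1))%nat -> ~ prime (Z.of_nat p)).

(* Main.v *)
Require Import Defs.
From Stdlib Require Import Reals Lra Lia Arith List ZArith Znumtheory ClassicalEpsilon.
From Coquelicot Require Import Coquelicot.
Import ListNotations.
Open Scope R_scope.

Lemma is_series_lim (a : nat -> R) l : is_series a l -> is_lim_seq (sum_n a) l.
Proof. intro H. exact H. Qed.

Lemma sum_Sn_R (a : nat -> R) n : sum_n a (S n) = sum_n a n + a (S n).
Proof. rewrite sum_Sn. reflexivity. Qed.

Lemma sum_n_mono (a : nat -> R) n k : (forall i, 0 <= a i) -> sum_n a n <= sum_n a (n + k).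
Proof.
  intro Ha. induction k as [|k IH].
  - rewrite Nat.add_0_r; lra.
  - rewrite Nat.add_succ_r, sum_Sn_R. specialize (Ha (S (n+k))). lra.
Qed.

Lemma sum_le_series (a : nat -> R) l n : (forall k, 0 <= a k) -> is_series a l -> sum_n a n <= l.
Proof.
  intros Ha Hs.
  assert (H := is_lim_seq_le_loc (fun _ => sum_n a n) (sum_n a) (sum_n a n) l).
  simpl in H. apply H.
  - exists n. intros N HN. replace N with (n + (N - n))%nat by lia. apply sum_n_mono; auto.
  - apply is_lim_seq_const.
  - exact Hs.
Qed.

Lemma exp_series (y : R) : is_series (fun i => / INR (fact i) * y ^ i) (exp y).
Proof. apply is_series_Reals. unfold exp. exact (proj2_sig (exist_exp y)). Qed.

Definition ee (n : nat) (y : R) : R := exp (- y) * y ^ n / INR (fact n).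
Fixpoint EE (n : nat) (y : R) : R :=
  match n with O => 0 | S n => EE n y + ee n y end.

Lemma EE_sum n y : EE n y = exp (- y) * sum_n (fun i => / INR (fact i) * y ^ i) (pred n).
Abort.

Lemma ee_ge0 n y : 0 <= y -> 0 <= ee n y.
Proof.
  intro Hy. unfold ee. apply Rmult_le_pos; [apply Rmult_le_pos|].
  - left; apply exp_pos.
  - apply pow_le; auto.
  - left; apply Rinv_0_lt_compat, INR_fact_lt_0.
Qed.

Lemma EE_ge0 n y : 0 <= y -> 0 <= EE n y.
Proof. intro Hy. induction n; simpl. lra. pose proof (ee_ge0 n y Hy). lra. Qed.

Lemma EE_partial n y : EE (S n) y = exp (- y) * sum_n (fun i => / INR (fact i) * y ^ i) n.
Proof.
  induction n.
  - cbn [EE]. rewrite sum_O. unfold ee. rewrite !pow_O. change (INR (fact 0)) with 1. field.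
  - change (EE (S (S n)) y) with (EE (S n) y + ee (S n) y). rewrite IHn, sum_Sn_R.
    unfold ee. field. apply not_0_INR, fact_neq_0.
Qed.

Lemma EE_le1 n y : 0 <= y -> EE n y <= 1.
Proof.
  intro Hy. destruct n. simpl; lra. rewrite EE_partial.
  assert (H := sum_le_series (fun i => / INR (fact i) * y ^ i) (exp y) n).
  assert (Hp : 0 < exp (-y)) by apply exp_pos.
  assert (exp (-y) * exp y = 1) by (rewrite <- exp_plus; replace (-y+y) with 0 by ring; apply exp_0).
  assert (sum_n (fun i => / INR (fact i) * y ^ i) n <= exp y).
  { apply H. intro k. apply Rmult_le_pos. left; apply Rinv_0_lt_compat, INR_fact_lt_0. apply pow_le; auto.
    apply exp_series. }
  nra.
Qed.

Lemma ee_le1 n y : 0 <= y -> ee n y <= 1.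
Proof. intro Hy. pose proof (EE_le1 (S n) y Hy). simpl in H. pose proof (EE_ge0 n y Hy). lra. Qed.

Lemma EE_mono n k y : 0 <= y -> EE n y <= EE (n + k) y.
Proof. intro Hy. induction k. rewrite Nat.add_0_r; lra. rewrite Nat.add_succ_r. simpl.
  pose proof (ee_ge0 (n+k) y Hy). lra. Qed.

Lemma y_ee n y : 0 <= y -> y * ee n y <= INR (S n).
Proof.
  intro Hy. assert (y * ee n y = INR (S n) * ee (S n) y).
  { unfold ee. rewrite fact_simpl, mult_INR. simpl pow. field. split; [apply not_0_INR, fact_neq_0| apply not_0_INR; lia]. }
  rewrite H. pose proof (ee_le1 (S n) y Hy). pose proof (pos_INR (S n)). nra.
Qed.

Lemma y_EE n y : 0 <= y -> y * EE n y <= INR n * INR n.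
Proof.
  intro Hy. induction n. simpl; lra.
  simpl EE. rewrite Rmult_plus_distr_l. pose proof (y_ee n y Hy). rewrite S_INR in *.
  pose proof (pos_INR n). nra.
Qed.

Lemma EE_0 n : EE (S n) 0 = 1.
Proof. induction n. cbn [EE]. unfold ee. rewrite pow_O, Ropp_0, exp_0. change (INR (fact 0)) with 1. field.
  change (EE (S (S n)) 0) with (EE (S n) 0 + ee (S n) 0). rewrite IHn. unfold ee. rewrite pow_i by lia. unfold Rdiv. ring. Qed.

Lemma ee_0 j : ee j 0 = if (j =? 0)%nat then 1 else 0.
Proof. destruct j; unfold ee. rewrite pow_O, Ropp_0, exp_0. change (INR (fact 0)) with 1. cbn [Nat.eqb]. field.
  rewrite pow_i by lia. cbn [Nat.eqb]. unfold Rdiv. ring. Qed.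

Lemma ee_deriv n y : is_derive (ee (S n)) y (ee n y - ee (S n) y).
Proof.
  unfold ee. auto_derive. auto.
  change (match n with 0%nat => 1 | S _ => INR n + 1 end) with (INR (S n)).
  change (fact n + n * fact n)%nat with (fact (S n)). rewrite fact_simpl, mult_INR.
  simpl pow. field. split; [apply not_0_INR, fact_neq_0| apply not_0_INR; lia].
Qed.

Lemma ee0_deriv y : is_derive (ee 0) y (- ee 0 y).
Proof. unfold ee. auto_derive. auto. simpl. field. Qed.

Lemma EE_deriv n y : is_derive (EE (S n)) y (- ee n y).
Proof.
  induction n.
  - apply is_derive_ext with (ee 0). intro t. cbn [EE]. symmetry; apply Rplus_0_l.
    apply ee0_deriv.
  - change (EE (S (S n))) with (fun t => EE (S n) t + ee (S n) t).
    replace (- ee (S n) y) with (- ee n y + (ee n y - ee (S n) y)) by ring.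
    apply (is_derive_plus (EE (S n)) (ee (S n))); auto. apply ee_deriv.
Qed.

Lemma ee_cont n y : continuous (ee n) y.
Proof. apply (ex_derive_continuous (V := R_NormedModule) (ee n)). unfold ee. auto_derive. auto. Qed.

Lemma is_series_R_lim (a : nat -> R) (l : R) : is_series a l -> is_lim_seq (sum_n a) l.
Proof. auto. Qed.

Lemma abs_le_inv x y : Rabs x <= y -> -y <= x <= y.
Proof. intro H. pose proof (Rabs_maj2 x). pose proof (Rle_abs x). lra. Qed.

Lemma tail_bound (c w : nat -> R) (C H K : R) n :
  (forall j, 0 <= c j) -> is_series c C -> (forall j, Rabs (w j) <= K) ->
  is_series (fun j => c j * w j) H ->
  Rabs (H - sum_n (fun j => c j * w j) n) <= K * (C - sum_n c n).
Proof.
  intros Hc HC Hw HH.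
  assert (Hk : forall k, Rabs (sum_n (fun j => c j * w j) (n + k) - sum_n (fun j => c j * w j) n)
                        <= K * (sum_n c (n + k) - sum_n c n)).
  { induction k.
    - rewrite Nat.add_0_r. unfold Rminus. rewrite !Rplus_opp_r, Rabs_R0. lra.
    - rewrite Nat.add_succ_r, !sum_Sn_R.
      specialize (Hw (S (n+k))). specialize (Hc (S (n+k))).
      replace (sum_n (fun j : nat => c j * w j) (n + k) + c (S (n + k)) * w (S (n + k)) -
               sum_n (fun j : nat => c j * w j) n)
        with ((sum_n (fun j : nat => c j * w j) (n + k) - sum_n (fun j : nat => c j * w j) n)
              + c (S (n + k)) * w (S (n + k))) by ring.
      eapply Rle_trans. apply Rabs_triang. rewrite Rabs_mult, (Rabs_right (c _)) by lra.
      assert (c (S (n + k)) * Rabs (w (S (n + k))) <= c (S (n+k)) * K) by (apply Rmult_le_compat_l; lra).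
      nra. }
  assert (Hev : forall N, (n <= N)%nat ->
    Rabs (sum_n (fun j => c j * w j) N - sum_n (fun j => c j * w j) n) <= K * (sum_n c N - sum_n c n)).
  { intros N HN. replace N with (n + (N - n))%nat by lia. apply Hk. }
  apply Rabs_le. split.
  - assert (Hl := is_lim_seq_le_loc (fun N => - (K * (sum_n c N - sum_n c n)))
       (fun N => sum_n (fun j => c j * w j) N - sum_n (fun j => c j * w j) n)
       (- (K * (C - sum_n c n))) (H - sum_n (fun j => c j * w j) n)).
    simpl in Hl. apply Hl.
    + exists n. intros N HN. specialize (Hev N HN). apply abs_le_inv in Hev. lra.
    + apply (is_lim_seq_opp (fun N => K * (sum_n c N - sum_n c n)) (K * (C - sum_n c n))).
      apply (is_lim_seq_scal_l _ K (C - sum_n c n)).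
      apply is_lim_seq_minus'. exact HC. apply is_lim_seq_const.
    + apply is_lim_seq_minus'. exact HH. apply is_lim_seq_const.
  - assert (Hl := is_lim_seq_le_loc
       (fun N => sum_n (fun j => c j * w j) N - sum_n (fun j => c j * w j) n)
       (fun N => (K * (sum_n c N - sum_n c n)))
       (H - sum_n (fun j => c j * w j) n) ((K * (C - sum_n c n)))).
    simpl in Hl. apply Hl.
    + exists n. intros N HN. specialize (Hev N HN). apply abs_le_inv in Hev. lra.
    + apply is_lim_seq_minus'. exact HH. apply is_lim_seq_const.
    + apply (is_lim_seq_scal_l _ K (C - sum_n c n)).
      apply is_lim_seq_minus'. exact HC. apply is_lim_seq_const.
Qed.

Lemma is_RInt_Rmult (f : R -> R) a b k I : is_RInt f a b I -> is_RInt (fun x => k * f x) a b (k * I).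
Proof. intro H. apply (is_RInt_scal f a b k I H). Qed.

Lemma is_RInt_Rplus (f g : R -> R) a b I J : is_RInt f a b I -> is_RInt g a b J ->
  is_RInt (fun x => f x + g x) a b (I + J).
Proof. intros H1 H2. apply (is_RInt_plus f g a b I J H1 H2). Qed.

Lemma partial_RInt (c : nat -> R) (u U : nat -> R -> R) (a b : R) :
  a <= b ->
  (forall j x, a <= x <= b -> is_derive (U j) x (u j x)) ->
  (forall j x, a <= x <= b -> continuous (u j) x) ->
  forall n, is_RInt (fun x => sum_n (fun j => c j * u j x) n) a b
                    (sum_n (fun j => c j * (U j b - U j a)) n).
Proof.
  intros Hab HD HC.
  assert (Hj : forall j, is_RInt (u j) a b (U j b - U j a)).
  { intro j. apply (is_RInt_derive (U j) (u j) a b).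
    - intros x Hx. rewrite Rmin_left, Rmax_right in Hx by lra. auto.
    - intros x Hx. rewrite Rmin_left, Rmax_right in Hx by lra. auto. }
  induction n.
  - rewrite sum_O. apply is_RInt_ext with (fun x => c 0%nat * u 0%nat x).
    intros x _. rewrite sum_O. reflexivity. apply is_RInt_Rmult, Hj.
  - rewrite sum_Sn_R. apply is_RInt_ext with
      (fun x => sum_n (fun j => c j * u j x) n + c (S n) * u (S n) x).
    intros x _. rewrite sum_Sn_R. reflexivity.
    apply is_RInt_Rplus; auto. apply is_RInt_Rmult, Hj.
Qed.

Definition clip (a b x : R) := Rmax a (Rmin b x).

Lemma clip_in a b x : a <= b -> a <= clip a b x <= b.
Proof. intro H. unfold clip. split. apply Rmax_l. apply Rmax_lub; auto. apply Rmin_l. Qed.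

Lemma clip_id a b x : a <= x <= b -> clip a b x = x.
Proof. intro H. unfold clip. rewrite Rmin_right by lra. rewrite Rmax_right by lra. auto. Qed.

Lemma series_RInt (c : nat -> R) (u U : nat -> R -> R) (h : R -> R) (a b K C : R) :
  a <= b -> 0 <= K ->
  (forall j, 0 <= c j) -> is_series c C ->
  (forall j x, a <= x <= b -> is_derive (U j) x (u j x)) ->
  (forall j x, a <= x <= b -> continuous (u j) x) ->
  (forall j x, a <= x <= b -> Rabs (u j x) <= K) ->
  (forall x, a <= x <= b -> is_series (fun j => c j * u j x) (h x)) ->
  exists I, is_series (fun j => c j * (U j b - U j a)) I /\ is_RInt h a b I.
Proof.
  intros Hab HK Hc HCs HD HCo Hb Hh.
  set (fi := fun n x => sum_n (fun j => c j * u j (clip a b x)) n).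
  set (g := fun x => h (clip a b x)).
  assert (Hfi : forall n, is_RInt (fi n) a b (sum_n (fun j => c j * (U j b - U j a)) n)).
  { intro n. apply is_RInt_ext with (fun x => sum_n (fun j => c j * u j x) n).
    - intros x Hx. rewrite Rmin_left, Rmax_right in Hx by lra. unfold fi.
      rewrite clip_id by lra. reflexivity.
    - apply partial_RInt; auto. }
  assert (Hlim : filterlim fi Hierarchy.eventually (locally (g : fct_UniformSpace R R_UniformSpace))).
  { apply (proj2 (filterlim_locally (F := Hierarchy.eventually) (fi : nat -> fct_UniformSpace R R_UniformSpace) g)). intro eps.
    assert (Hc0 : is_lim_seq (fun n => K * (C - sum_n c n)) 0).
    { replace (Finite 0) with (Rbar_mult K (C - C)).
      apply is_lim_seq_scal_l. apply is_lim_seq_minus'. apply is_lim_seq_const. exact HCs.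
      simpl. f_equal. ring. }
    destruct (Hc0 (ball 0 eps)) as [N HN].
    { exists eps. auto. }
    exists N. intros n Hn t. specialize (HN n Hn).
    unfold ball; simpl. unfold fct_ball. unfold ball; simpl. unfold AbsRing_ball. 
    unfold ball in HN; simpl in HN; unfold AbsRing_ball in HN.
    change (abs (minus (K * (C - sum_n c n)) 0)) with (Rabs (K * (C - sum_n c n) - 0)) in HN.
    change (abs (minus (fi n t) (g t))) with (Rabs (fi n t - g t)).
    rewrite Rminus_0_r in HN.
    assert (Ht := clip_in a b t Hab).
    pose proof (tail_bound c (fun j => u j (clip a b t)) C (g t) K n Hc HCs
      (fun j => Hb j _ Ht) (Hh _ Ht)).
    unfold fi. rewrite Rabs_minus_sym.
    eapply Rle_lt_trans. apply H. eapply Rle_lt_trans. apply Rle_abs. exact HN. }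
  destruct (filterlim_RInt fi a b Hierarchy.eventually (eventually_filter)
              g _ Hfi Hlim) as [I [HI1 HI2]].
  exists I. split.
  - exact HI1.
  - apply is_RInt_ext with g; auto.
    intros x Hx. rewrite Rmin_left, Rmax_right in Hx by lra. unfold g. rewrite clip_id by lra. auto.
Qed.

Definition pp (mu : R) (j : nat) : R := ee j (mu / 2).
Definition uu (m' j : nat) (x : R) : R := / 2 * ee (m' + j) (x / 2).
Definition UU (m' j : nat) (x : R) : R := - EE (S (m' + j)) (x / 2).

Ltac Req := match goal with |- ?a = ?b => change (@eq R a b) end.

Lemma pp_ge0 mu j : 0 <= mu -> 0 <= pp mu j.
Proof. intro; apply ee_ge0; lra. Qed.

Lemma pp_series mu : is_series (pp mu) 1.
Proof.
  assert (H := is_series_scal (exp (- (mu/2))) _ _ (exp_series (mu/2))).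
  replace 1 with (scal (exp (- (mu / 2))) (exp (mu / 2))).
  - apply is_series_ext with (2 := H). intro n. unfold pp, ee. change (scal ?a ?b) with (a * b). Req. field.
    apply not_0_INR, fact_neq_0.
  - change (scal ?a ?b) with (a * b). rewrite <- exp_plus. replace (- (mu/2) + mu/2) with 0 by ring.
    apply exp_0.
Qed.

Lemma UU_deriv m' j x : is_derive (UU m' j) x (uu m' j x).
Proof.
  assert (H1 := EE_deriv (m'+j) (x/2)).
  assert (H2 : is_derive (fun t : R => t / 2) x (/2)). { auto_derive. auto. Req. field. }
  pose proof (is_derive_comp (EE (S (m' + j))) (fun t : R => t / 2) x _ _ H1 H2) as H3.
  apply is_derive_opp in H3.
  replace (uu m' j x) with (opp (scal (/2) (- ee (m'+j) (x/2)))).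
  exact H3.
  unfold uu. change (opp (scal ?a ?b)) with (- (a * b)). Req. ring.
Qed.

Lemma uu_cont m' j x : continuous (uu m' j) x.
Proof.
  apply (ex_derive_continuous (V := R_NormedModule) (uu m' j)). unfold uu, ee. auto_derive. auto.
Qed.

Lemma uu_bound m' j x : 0 <= x -> Rabs (uu m' j x) <= /2.
Proof.
  intro Hx. unfold uu. pose proof (ee_ge0 (m'+j) (x/2)). pose proof (ee_le1 (m'+j) (x/2)).
  rewrite Rabs_right. nra. nra.
Qed.

Lemma lim_series (a : nat -> R) (l : R) : is_lim_seq (sum_n a) l -> is_series a l.
Proof. auto. Qed.

Lemma series_first (a : nat -> R) : (forall j, a (S j) = 0) -> is_series a (a 0%nat).
Proof.
  intro H. assert (E : forall n, sum_n a n = a 0%nat).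
  { induction n. apply sum_O. rewrite sum_Sn_R, IHn, H. Req. ring. }
  apply lim_series. apply (is_lim_seq_ext (fun _ => a 0%nat)). intro n; rewrite E; auto. apply is_lim_seq_const.
Qed.

Lemma series_value_eq (f : nat -> R) l : is_series f l -> series_value f = l.
Proof.
  intro H. apply is_series_Reals in H. unfold series_value.
  assert (Hs := epsilon_spec (inhabits 0) (fun l => infinite_sum f l) (ex_intro _ l H)).
  eapply uniqueness_sum; eauto.
Qed.

Lemma target_ex m' mu x : 0 <= mu -> 0 <= x -> ex_series (fun j => pp mu j * uu m' j x).
Proof.
  intros Hmu Hx. apply (ex_series_le (V := R_CompleteNormedModule) _ (pp mu)).
  - intro n. change (norm ?a) with (Rabs a). pose proof (pp_ge0 mu n Hmu). pose proof (uu_bound m' n x Hx).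
    rewrite Rabs_mult, Rabs_right by lra. assert (Rabs (uu m' n x) <= 1) by lra. nra.
  - exists 1. apply pp_series.
Qed.

Lemma pdf_series m' mu x : 0 <= mu -> 0 < x ->
  is_series (fun j => pp mu j * uu m' j x) (chi2_pdf (S m') mu x).
Proof.
  intros Hmu Hx. unfold chi2_pdf.
  destruct (Rle_dec x 0) as [Hc|_]; [lra|].
  replace (S m' - 1)%nat with m' by lia.
  destruct (Rlt_dec 0 mu) as [Hmu'|Hmu'].
  - set (z := sqrt (mu * x)). set (s := sqrt (x / mu)).
    set (E1 := exp (- (mu / 2))). set (E2 := exp (- (x / 2))).
    assert (HE1 : 0 < E1) by apply exp_pos. assert (HE2 : 0 < E2) by apply exp_pos.
    assert (Hz2 : z ^ 2 = mu * x) by (apply pow2_sqrt; nra).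
    assert (Hsz : s * z = x).
    { unfold s, z. rewrite <- sqrt_mult. replace (x / mu * (mu * x)) with (x * x) by (field; lra).
      apply sqrt_square; lra. apply Rdiv_le_0_compat; lra. nra. }
    assert (Hexp : exp (- (x + mu) / 2) = E1 * E2).
    { unfold E1, E2. rewrite <- exp_plus. f_equal. field. }
    assert (HT := Series_correct _ (target_ex m' mu x Hmu (Rlt_le _ _ Hx))).
    set (T := Series (fun j => pp mu j * uu m' j x)) in *.
    set (D := (z / 2) ^ m' * 2 / (E1 * E2 * (x / 2) ^ m')).
    assert (Hx2 : (x/2)^m' <> 0) by (apply pow_nonzero; lra).
    assert (HB : is_series (fun k => (z / 2) ^ (2 * k + m') / (INR (fact k) * INR (fact (k + m')))) (D * T)).
    { apply is_series_ext with (2 := is_series_scal D _ _ HT). intro k.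
      change (scal ?a ?b) with (a * b). Req.
      unfold pp, uu, ee. rewrite (pow_add (z/2) (2*k) m'), (pow_mult (z/2) 2 k).
      replace ((z / 2) ^ 2) with ((mu / 2) * (x / 2)) by (unfold Rdiv; rewrite Rpow_mult_distr, Hz2; field).
      rewrite Rpow_mult_distr, (Nat.add_comm k m'), pow_add.
      fold E1 E2. unfold D. field.
      repeat split; try lra; try (apply not_0_INR, fact_neq_0). }
    unfold besselI. rewrite (series_value_eq _ _ HB). fold z s. rewrite Hexp.
    assert (Hp : s ^ m' * (z / 2) ^ m' = (x/2)^m') by (rewrite <- Rpow_mult_distr; f_equal; lra).
    replace (/ 2 * (E1 * E2) * s ^ m' * (D * T)) with (T : R). exact HT.
    unfold D. Req.
    replace (/ 2 * (E1 * E2) * s ^ m' * ((z / 2) ^ m' * 2 / (E1 * E2 * (x / 2) ^ m') * T))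
      with (/2 * (E1*E2) * (s ^ m' * (z / 2) ^ m') * 2 / (E1 * E2 * (x / 2) ^ m') * T)
      by (field; repeat split; lra).
    rewrite Hp. field. repeat split; lra.
  - assert (mu = 0) by lra. subst mu.
    apply is_series_ext with (a := fun j => pp 0 j * uu m' j x). auto.
    replace (x ^ m' * exp (- x / 2) / (2 ^ S m' * INR (fact m'))) with (pp 0 0 * uu m' 0 x).
    apply series_first. intro j. unfold pp. replace (0/2) with 0 by field. rewrite ee_0. simpl. ring.
    unfold pp, uu. replace (0/2) with 0 by field. rewrite ee_0. cbn [Nat.eqb]. unfold ee.
    rewrite Nat.add_0_r. unfold Rdiv. rewrite Rpow_mult_distr, pow_inv. cbn [pow].
    replace (- x * / 2) with (- (x * / 2)) by ring. field.
    split; [apply not_0_INR, fact_neq_0|]. apply pow_nonzero. lra.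
Qed.

Lemma sum_n_le_R (a b : nat -> R) n : (forall j, a j <= b j) -> sum_n a n <= sum_n b n.
Proof. intro H. induction n. rewrite !sum_O; auto. rewrite !sum_Sn_R. specialize (H (S n)). lra. Qed.

Lemma sum_n_le_R' (a b : nat -> R) n : (forall j, (j <= n)%nat -> a j <= b j) -> sum_n a n <= sum_n b n.
Proof. intro H. induction n. rewrite !sum_O; auto. rewrite !sum_Sn_R.
  assert (sum_n a n <= sum_n b n) by (apply IHn; intros; apply H; lia). specialize (H (S n) (le_n _)). lra. Qed.

Lemma sum_n_scal_R (a : nat -> R) k n : sum_n (fun j => a j * k) n = sum_n a n * k.
Proof. induction n. rewrite !sum_O; auto. rewrite !sum_Sn_R, IHn. Req. ring. Qed.

Lemma improper_unique g a l1 l2 : improper_int g a l1 -> improper_int g a l2 -> l1 = l2.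
Proof.
  intros [H1a H1b] [H2a H2b].
  destruct (Req_dec l1 l2) as [|Hne]; auto. exfalso.
  set (eps := Rabs (l1 - l2) / 2).
  assert (He : 0 < eps) by (unfold eps; assert (l1 - l2 <> 0) by lra; pose proof (Rabs_pos_lt _ H); lra).
  destruct (H1b eps He) as [B1 HB1]. destruct (H2b eps He) as [B2 HB2].
  set (b := Rmax a (Rmax B1 B2)).
  assert (Hab : a <= b) by apply Rmax_l.
  destruct (H1a b Hab) as [pr].
  assert (HB1' : B1 <= b) by (unfold b; eapply Rle_trans; [apply Rmax_l| apply Rmax_r]).
  assert (HB2' : B2 <= b) by (unfold b; eapply Rle_trans; [apply Rmax_r| apply Rmax_r]).
  specialize (HB1 b pr HB1'). specialize (HB2 b pr HB2').
  assert (Rabs (l1 - l2) < 2 * eps).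
  { replace (l1 - l2) with (- (RiemannInt pr - l1) + (RiemannInt pr - l2)) by ring.
    eapply Rle_lt_trans. apply Rabs_triang. rewrite Rabs_Ropp. lra. }
  unfold eps in H. lra.
Qed.

Lemma ImpInt_of g a l : improper_int g a l -> ImpInt g a = l.
Proof.
  intro H. unfold ImpInt.
  assert (Hs := epsilon_spec (inhabits 0) (fun l => improper_int g a l) (ex_intro _ l H)).
  eapply improper_unique; eauto.
Qed.

Lemma ImpInt_val (g : R -> R) a l (I : R -> R) :
  (forall b, a <= b -> is_RInt g a b (I b)) ->
  (forall eps, 0 < eps -> exists B, forall b, B <= b -> a <= b -> Rabs (I b - l) < eps) ->
  ImpInt g a = l.
Proof.
  intros HI Hl. apply ImpInt_of. split.
  - intros b Hb. constructor. apply ex_RInt_Reals_0. exists (I b). auto.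
  - intros eps He. destruct (Hl eps He) as [B HB]. exists (Rmax B a).
    intros b pr Hb. assert (B <= b) by (eapply Rle_trans; [apply Rmax_l|exact Hb]).
    assert (a <= b) by (eapply Rle_trans; [apply Rmax_r|exact Hb]).
    rewrite <- RInt_Reals. rewrite (is_RInt_unique _ _ _ _ (HI b H0)). auto.
Qed.

Definition Sterm (m' : nat) (mu x : R) (j : nat) := pp mu j * EE (S (m' + j)) (x / 2).
Definition Sfun (m' : nat) (mu x : R) := Series (Sterm m' mu x).

Lemma Sterm_bounds m' mu x j : 0 <= mu -> 0 <= x -> 0 <= Sterm m' mu x j <= pp mu j.
Proof.
  intros Hmu Hx. unfold Sterm. pose proof (pp_ge0 mu j Hmu).
  pose proof (EE_ge0 (S (m'+j)) (x/2)). pose proof (EE_le1 (S (m'+j)) (x/2)).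
  split; nra.
Qed.

Lemma Sterm_ex m' mu x : 0 <= mu -> 0 <= x -> ex_series (Sterm m' mu x).
Proof.
  intros Hmu Hx. apply (ex_series_le (V := R_CompleteNormedModule) _ (pp mu)).
  - intro n. change (norm ?a) with (Rabs a). destruct (Sterm_bounds m' mu x n Hmu Hx).
    rewrite Rabs_right; lra.
  - exists 1. apply pp_series.
Qed.

Lemma Sfun_correct m' mu x : 0 <= mu -> 0 <= x -> is_series (Sterm m' mu x) (Sfun m' mu x).
Proof. intros. apply Series_correct, Sterm_ex; auto. Qed.

Lemma Sfun_ge0 m' mu x : 0 <= mu -> 0 <= x -> 0 <= Sfun m' mu x.
Proof.
  intros Hmu Hx. pose proof (sum_le_series _ _ 0 (fun k => proj1 (Sterm_bounds m' mu x k Hmu Hx))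
    (Sfun_correct m' mu x Hmu Hx)). rewrite sum_O in H.
  pose proof (Sterm_bounds m' mu x 0 Hmu Hx). lra.
Qed.

Lemma chi2_RInt m' mu lam b : 0 <= mu -> 0 < lam -> lam <= b ->
  is_RInt (chi2_pdf (S m') mu) lam b (Sfun m' mu lam - Sfun m' mu b).
Proof.
  intros Hmu Hlam Hb.
  destruct (series_RInt (pp mu) (uu m') (UU m') (chi2_pdf (S m') mu) lam b (/2) 1) as [I [HI1 HI2]]; auto.
  - lra.
  - intro j; apply pp_ge0; auto.
  - apply pp_series.
  - intros; apply UU_deriv.
  - intros; apply uu_cont.
  - intros j x Hx. apply uu_bound. lra.
  - intros x Hx. apply pdf_series; auto; lra.
  - replace (Sfun m' mu lam - Sfun m' mu b) with I. auto.
    apply is_series_unique in HI1. rewrite <- HI1.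
    apply is_series_unique.
    apply is_series_ext with (fun j => plus (Sterm m' mu lam j) (opp (Sterm m' mu b j))).
    + intro n. unfold Sterm, UU. change (plus ?a (opp ?b)) with (a - b). Req. ring.
    + exact (is_series_minus _ _ _ _ (Sfun_correct m' mu lam Hmu ltac:(lra)) (Sfun_correct m' mu b Hmu ltac:(lra))).
Qed.

Lemma Sfun_lim m' mu : 0 <= mu -> forall eps, 0 < eps ->
  exists B, 0 < B /\ forall b, B <= b -> Sfun m' mu b < eps.
Proof.
  intros Hmu eps He.
  assert (Hp := pp_series mu).
  assert (Hl : is_lim_seq (fun n => 1 - sum_n (pp mu) n) 0).
  { replace (Finite 0) with (Finite (1 - 1)) by (f_equal; ring).
    apply is_lim_seq_minus'. apply is_lim_seq_const. exact Hp. }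
  destruct (Hl (ball 0 (mkposreal (eps/2) ltac:(lra)))) as [n Hn].
  { exists (mkposreal (eps/2) ltac:(lra)). auto. }
  specialize (Hn n (le_n n)). unfold ball in Hn; simpl in Hn; unfold AbsRing_ball in Hn.
  change (abs (minus ?a ?b)) with (Rabs (a - b)) in Hn. rewrite Rminus_0_r in Hn.
  set (X := INR (S (m' + n))).
  exists (4 * X * X / eps + 1). split.
  { assert (0 <= 4 * X * X / eps). apply Rdiv_le_0_compat. unfold X. pose proof (pos_INR (S (m'+n))). nra. lra. lra. }
  intros b Hb.
  assert (HX : 0 <= 4 * X * X / eps) by (apply Rdiv_le_0_compat; [unfold X; pose proof (pos_INR (S (m'+n))); nra| lra]).
  assert (Hb0 : 0 < b) by lra.
  unfold Sfun. rewrite (Series_incr_n _ (S n) ltac:(lia) (Sterm_ex m' mu b Hmu ltac:(lra))).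
  simpl pred. rewrite <- sum_n_Reals.
  assert (H1 : sum_n (Sterm m' mu b) n <= EE (S (m' + n)) (b / 2)).
  { eapply Rle_trans. apply (sum_n_le_R' _ (fun j => pp mu j * EE (S (m' + n)) (b / 2))).
    - intros j Hj. unfold Sterm.
      apply Rmult_le_compat_l. apply pp_ge0; auto.
      replace (S (m' + n)) with (S (m' + j) + (n - j))%nat by lia. apply EE_mono. lra.
    - rewrite sum_n_scal_R.
      pose proof (sum_le_series _ _ n (fun k => pp_ge0 mu k Hmu) Hp).
      pose proof (EE_ge0 (S (m' + n)) (b/2)). nra. }
  assert (H2 : (b/2) * EE (S (m' + n)) (b / 2) <= X * X) by (apply y_EE; lra).
  assert (H3 : EE (S (m' + n)) (b / 2) < eps / 2).
  { assert (X * X < (b/2) * (eps/2)).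
    { assert (4 * X * X / eps * eps = 4 * X * X) by (field; lra).
      assert (4 * X * X < b * eps) by nra. lra. }
    assert (0 < b/2) by lra. 
    destruct (Rlt_or_le (EE (S (m' + n)) (b / 2)) (eps/2)); auto. nra. }
  assert (Hts : is_series (fun k => pp mu (S n + k)) (1 - sum_n (pp mu) n)).
  { apply is_series_incr_n. lia. simpl pred. 
    match goal with |- is_series _ ?v => assert (E : v = 1) by (change (plus ?a ?b) with (a+b); change (@sum_n (NormedModule.AbelianMonoid R_AbsRing R_NormedModule)) with (@sum_n R_AbelianMonoid); Req; ring); rewrite E end.
    exact Hp. }
  assert (H4 : Series (fun k => Sterm m' mu b (S n + k)) <= 1 - sum_n (pp mu) n).
  { rewrite <- (is_series_unique _ _ Hts). apply Series_le.
    - intro k. apply Sterm_bounds; lra.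
    - exists (1 - sum_n (pp mu) n). exact Hts. }
  apply Rabs_def2 in Hn. lra.
Qed.

Lemma chi2_tail_val m' mu lam : 0 <= mu -> 0 < lam -> chi2_tail (S m') mu lam = Sfun m' mu lam.
Proof.
  intros Hmu Hlam. unfold chi2_tail.
  apply ImpInt_val with (I := fun b => Sfun m' mu lam - Sfun m' mu b).
  - intros b Hb. apply chi2_RInt; auto.
  - intros eps He. destruct (Sfun_lim m' mu Hmu eps He) as [B [HB0 HB]].
    exists B. intros b Hb Hlb. specialize (HB b Hb). pose proof (Sfun_ge0 m' mu b Hmu ltac:(lra)).
    replace (Sfun m' mu lam - Sfun m' mu b - Sfun m' mu lam) with (- Sfun m' mu b) by ring.
    rewrite Rabs_Ropp, Rabs_right; lra.
Qed.

Lemma Sfun_0 m' lam : 0 <= lam -> Sfun m' 0 lam = EE (S m') (lam / 2).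
Proof.
  intro Hl. unfold Sfun. apply is_series_unique.
  replace (EE (S m') (lam / 2)) with (Sterm m' 0 lam 0).
  apply series_first. intro j. unfold Sterm, pp. replace (0/2) with 0 by field. rewrite ee_0. cbn [Nat.eqb]. ring.
  unfold Sterm, pp. replace (0/2) with 0 by field. rewrite ee_0. cbn [Nat.eqb]. rewrite Nat.add_0_r. ring.
Qed.

Lemma upper_gamma_val m' y : 0 <= y -> upper_gamma (S m') y = INR (fact m') * EE (S m') y.
Proof.
  intro Hy. unfold upper_gamma.
  apply ImpInt_val with (I := fun b => INR (fact m') * (EE (S m') y - EE (S m') b)).
  - intros b Hb.
    apply is_RInt_ext with (fun t => INR (fact m') * ee m' t).
    { intros x _. unfold ee. replace (S m' - 1)%nat with m' by lia. Req. field. apply not_0_INR, fact_neq_0. }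
    apply is_RInt_Rmult.
    replace (EE (S m') y - EE (S m') b) with (minus (opp (EE (S m') b)) (opp (EE (S m') y))).
    2: { change (minus (opp ?a) (opp ?b)) with (-a - - b). Req. ring. }
    apply (is_RInt_derive (fun t => opp (EE (S m') t))).
    + intros x _. apply (is_derive_ext (fun t => - EE (S m') t)). reflexivity.
      replace (ee m' x) with (- (- ee m' x)) by ring. apply (is_derive_opp (EE (S m'))). apply EE_deriv.
    + intros; apply ee_cont.
  - intros eps He.
    set (X := INR (S m')). set (F := INR (fact m')).
    assert (HF : 0 < F) by apply INR_fact_lt_0.
    exists (F * X * X / eps + 1). intros b Hb Hyb.
    assert (H0 : 0 <= F * X * X / eps) by (apply Rdiv_le_0_compat; [unfold X; pose proof (pos_INR (S m')); nra | lra]).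
    assert (Hb0 : 0 < b) by lra.
    pose proof (y_EE (S m') b ltac:(lra)). fold X in H.
    pose proof (EE_ge0 (S m') b ltac:(lra)).
    replace (F * (EE (S m') y - EE (S m') b) - F * EE (S m') y) with (- (F * EE (S m') b)) by ring.
    rewrite Rabs_Ropp, Rabs_right by nra.
    assert (F * X * X / eps * eps = F * X * X) by (field; lra).
    assert (F * X * X < b * eps) by nra.
    nra.
Qed.

Lemma marcum_0 m' lam : 0 < lam -> marcumQ (S m') (sqrt 0) (sqrt lam) = Sfun m' 0 lam.
Proof.
  intro Hl. unfold marcumQ. rewrite sqrt_0. destruct (Rlt_dec 0 0) as [H|_]; [lra|].
  unfold Gamma_fn. rewrite !upper_gamma_val by (try lra; rewrite pow2_sqrt; lra).
  rewrite pow2_sqrt by lra. rewrite Sfun_0 by lra. rewrite EE_0. field. apply not_0_INR, fact_neq_0.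
Qed.

Lemma marcum_pos m' mu lam : 0 < mu -> 0 < lam -> marcumQ (S m') (sqrt mu) (sqrt lam) = Sfun m' mu lam.
Proof.
  intros Hmu Hl. unfold marcumQ.
  set (a := sqrt mu).
  assert (Ha : 0 < a) by (apply sqrt_lt_R0; lra).
  destruct (Rlt_dec 0 a) as [_|H]; [|lra].
  replace (S m' - 1)%nat with m' by lia.
  assert (Ham : 0 < a ^ m') by (apply pow_lt; lra).
  set (gM := fun t => t ^ S m' * exp (- (a ^ 2 + t ^ 2) / 2) * besselI m' (a * t)).
  assert (Hsl : 0 < sqrt lam) by (apply sqrt_lt_R0; lra).
  assert (HI : forall b, sqrt lam <= b -> is_RInt gM (sqrt lam) b (a ^ m' * (Sfun m' mu lam - Sfun m' mu (b ^ 2)))).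
  { intros b Hb.
    destruct (series_RInt (fun j => a ^ m' * pp mu j) (fun j t => t * ee (m' + j) (t ^ 2 / 2))
       (fun j t => UU m' j (t ^ 2)) gM (sqrt lam) b b (a ^ m' * 1)) as [I [HI1 HI2]]; auto; try lra.
    - intro j. pose proof (pp_ge0 mu j ltac:(lra)). nra.
    - exact (is_series_scal (a ^ m') _ _ (pp_series mu)).
    - intros j x Hx.
      assert (H2 : is_derive (fun t : R => t ^ 2) x (2 * x)). { auto_derive. auto. Req. ring. }
      pose proof (is_derive_comp (UU m' j) (fun t => t ^ 2) x (uu m' j (x^2)) (2*x) (UU_deriv m' j (x ^ 2)) H2) as H.
      replace (x * ee (m' + j) (x ^ 2 / 2)) with (scal (2 * x) (uu m' j (x ^ 2))). exact H.
      change (scal ?u ?v) with (u * v). unfold uu. Req. field.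
    - intros j x Hx. apply (ex_derive_continuous (V := R_NormedModule) (fun t => t * ee (m' + j) (t ^ 2 / 2))).
      unfold ee. auto_derive. auto.
    - intros j x Hx. pose proof (ee_ge0 (m'+j) (x^2/2) ltac:(nra)). pose proof (ee_le1 (m'+j) (x^2/2) ltac:(nra)).
      rewrite Rabs_right by nra. nra.
    - intros x Hx. assert (Hx0 : 0 < x) by lra.
      pose proof (is_series_scal (a ^ m' * 2 * x) _ _ (pdf_series m' mu (x ^ 2) ltac:(lra) ltac:(nra))) as H.
      eapply is_series_ext. 2: { replace (gM x) with (scal (a ^ m' * 2 * x) (chi2_pdf (S m') mu (x ^ 2))). exact H.
        change (scal ?u ?v) with (u * v).
        unfold chi2_pdf, gM. destruct (Rle_dec (x ^ 2) 0) as [Hc|_]; [nra|].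
        destruct (Rlt_dec 0 mu) as [_|Hc]; [|lra].
        replace (S m' - 1)%nat with m' by lia.
        replace (sqrt (mu * x ^ 2)) with (a * x) by (rewrite sqrt_mult by nra; rewrite sqrt_pow2 by lra; unfold a; ring).
        replace (sqrt (x ^ 2 / mu)) with (x / a) by (rewrite sqrt_div by nra; rewrite sqrt_pow2 by lra; unfold a; reflexivity).
        replace (a ^ 2) with mu by (unfold a; rewrite pow2_sqrt; lra).
        unfold Rdiv. rewrite Rpow_mult_distr, pow_inv. replace (- (mu + x^2)) with (- (x^2 + mu)) by ring. change (x ^ S m') with (x * x ^ m').
        Req. field. lra. }
      intro j. change (scal ?u ?v) with (u * v). unfold uu. Req. field.
    - replace (a ^ m' * (Sfun m' mu lam - Sfun m' mu (b ^ 2))) with I. auto.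
      apply is_series_unique in HI1. rewrite <- HI1.
      apply is_series_unique.
      apply is_series_ext with (fun j => scal (a ^ m') (plus (Sterm m' mu lam j) (opp (Sterm m' mu (b ^ 2) j)))).
      + intro n. unfold Sterm, UU. rewrite pow2_sqrt by lra.
        change (scal ?u (plus ?v (opp ?w))) with (u * (v - w)). Req. ring.
      + exact (is_series_scal (a ^ m') _ _ (is_series_minus _ _ _ _ (Sfun_correct m' mu lam ltac:(lra) ltac:(lra))
             (Sfun_correct m' mu (b ^ 2) ltac:(lra) ltac:(nra)))). }
  rewrite (ImpInt_val gM (sqrt lam) (a ^ m' * Sfun m' mu lam) _ HI).
  - field. lra.
  - intros eps He. destruct (Sfun_lim m' mu ltac:(lra) (eps / a ^ m') ltac:(apply Rdiv_lt_0_compat; lra)) as [B [HB0 HB]].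
    exists (B + 1). intros b Hb Hlb.
    assert (B <= b ^ 2) by nra. specialize (HB _ H).
    pose proof (Sfun_ge0 m' mu (b ^ 2) ltac:(lra) ltac:(nra)).
    replace (a ^ m' * (Sfun m' mu lam - Sfun m' mu (b ^ 2)) - a ^ m' * Sfun m' mu lam)
      with (- (a ^ m' * Sfun m' mu (b ^ 2))) by ring.
    rewrite Rabs_Ropp, Rabs_right by nra.
    assert (eps / a ^ m' * a ^ m' = eps) by (field; lra). nra.
Qed.

Lemma pp_conv mu d n : sum_f_R0 (fun k => pp mu k * pp d (n - k)) n = pp (mu + d) n.
Proof.
  set (E := exp (- ((mu + d) / 2)) / INR (fact n)).
  rewrite (sum_eq _ (fun k => (Binomial.C n k * (mu/2) ^ k * (d/2) ^ (n - k)) * E)).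
  - rewrite <- scal_sum, <- binomial. unfold pp, ee, E.
    replace (mu / 2 + d / 2) with ((mu + d) / 2) by field. field. apply not_0_INR, fact_neq_0.
  - intros k Hk. unfold pp, ee, E, Binomial.C.
    replace (- ((mu + d) / 2)) with (- (mu/2) + - (d/2)) by field. rewrite exp_plus.
    field. repeat split; apply not_0_INR, fact_neq_0.
Qed.

Lemma Sfun_mono m' mu1 mu2 lam : 0 <= mu1 <= mu2 -> 0 <= lam -> Sfun m' mu1 lam <= Sfun m' mu2 lam.
Proof.
  intros Hm Hl. set (d := mu2 - mu1).
  assert (Hd : 0 <= d) by (unfold d; lra).
  pose proof (is_series_mult_pos (Sterm m' mu1 lam) (pp d) _ _ (Sfun_correct m' mu1 lam ltac:(lra) Hl)
     (pp_series d) (fun k => proj1 (Sterm_bounds m' mu1 lam k ltac:(lra) Hl)) (fun k => pp_ge0 d k Hd)) as H.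
  rewrite Rmult_1_r in H. rewrite <- (is_series_unique _ _ H).
  apply Series_le.
  - intro n. split.
    + apply cond_pos_sum. intro k. pose proof (pp_ge0 d (n - k) Hd).
      pose proof (Sterm_bounds m' mu1 lam k ltac:(lra) Hl). nra.
    + unfold Sterm at 2. replace mu2 with (mu1 + d) by (unfold d; ring). rewrite <- pp_conv.
      rewrite (Rmult_comm (sum_f_R0 _ n)), scal_sum. apply sum_Rle. intros k Hk. unfold Sterm.
      pose proof (pp_ge0 d (n - k) Hd). pose proof (pp_ge0 mu1 k ltac:(lra)).
      assert (EE (S (m' + k)) (lam / 2) <= EE (S (m' + n)) (lam / 2)).
      { replace (S (m' + n)) with (S (m' + k) + (n - k))%nat by lia. apply EE_mono. lra. }
      assert (0 <= pp mu1 k * pp d (n - k)) by nra. nra.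
  - apply Sterm_ex; lra.
Qed.

Lemma sumR_app f l1 l2 : sumR f (l1 ++ l2) = sumR f l1 + sumR f l2.
Proof. induction l1; simpl. ring. rewrite IHl1. ring. Qed.

Lemma sumR_nonneg f l : (forall i, In i l -> 0 <= f i) -> 0 <= sumR f l.
Proof. induction l; simpl; intros H. lra. pose proof (H a (or_introl eq_refl)).
  assert (0 <= sumR f l) by (apply IHl; auto). lra. Qed.

Lemma sumR_incl f (l1 l2 : list nat) : NoDup l1 -> incl l1 l2 -> (forall i, In i l2 -> 0 <= f i) ->
  sumR f l1 <= sumR f l2.
Proof.
  revert l2. induction l1 as [|a l1 IH]; intros l2 Hnd Hinc Hpos.
  - simpl. apply sumR_nonneg; auto.
  - assert (Ha : In a l2) by (apply Hinc; left; auto).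
    destruct (in_split _ _ Ha) as [x [y Hxy]]. subst l2.
    rewrite sumR_app. simpl.
    inversion Hnd as [|? ? Hna Hnd']. subst.
    assert (H1 : sumR f l1 <= sumR f (x ++ y)).
    { apply IH; auto.
      - intros b Hb. assert (Hb2 : In b (x ++ a :: y)) by (apply Hinc; right; auto).
        apply in_app_or in Hb2. apply in_or_app. destruct Hb2 as [|[|]]; auto. subst; contradiction.
      - intros i Hi. apply Hpos. apply in_app_or in Hi. apply in_or_app. destruct Hi; auto. right; right; auto. }
    rewrite sumR_app in H1. lra.
Qed.

Open Scope nat_scope.

Lemma M_incr v M : consecutive_primes v M -> forall i j, i < j < v -> M i < M j.
Proof.
  intros [_ HM] i j Hij. induction j. lia.
  destruct (Nat.eq_dec i j). subst. replace (S j) with (j + 1) by lia. apply HM. lia.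
  assert (M i < M j) by (apply IHj; lia). assert (M j < M (j + 1)) by (apply HM; lia).
  replace (S j) with (j+1) by lia. lia.
Qed.

Lemma mod_div (p a b : nat) : a mod p = b mod p -> (Z.of_nat p | Z.of_nat a - Z.of_nat b)%Z.
Proof.
  intro H. pose proof (Nat.div_mod_eq a p). pose proof (Nat.div_mod_eq b p).
  exists (Z.of_nat (a / p) - Z.of_nat (b / p))%Z.
  rewrite H in H0. nia.
Qed.

Lemma crt (p q a b N : nat) : prime (Z.of_nat p) -> prime (Z.of_nat q) -> p <> q ->
  a mod p = b mod p -> a mod q = b mod q -> a < N -> b < N -> N < p * q -> a = b.
Proof.
  intros Hp Hq Hpq Ha Hb HaN HbN HN.
  destruct (mod_div p a b Ha) as [t1 Ht1]. destruct (mod_div q a b Hb) as [t2 Ht2].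
  assert (Hrel : rel_prime (Z.of_nat p) (Z.of_nat q)).
  { apply prime_rel_prime; auto. intro Hd. apply Hpq. apply Nat2Z.inj. apply prime_div_prime; auto. }
  assert (Hd : (Z.of_nat p | t2)%Z).
  { apply Gauss with (Z.of_nat q); auto. exists t1. rewrite Z.mul_comm. lia. }
  destruct Hd as [u Hu]. subst t2.
  destruct (Z.eq_dec u 0). subst. lia.
  exfalso. assert (Z.of_nat p * Z.of_nat q <= Z.abs (Z.of_nat a - Z.of_nat b))%Z.
  { rewrite Ht2. rewrite !Z.abs_mul. pose proof (Z.abs_pos u). 
    rewrite (Z.abs_eq (Z.of_nat p)), (Z.abs_eq (Z.of_nat q)) by lia. nia. }
  lia.
Qed.

Lemma ups_length (N v s : nat) (M : nat -> nat) (Omega : list nat) (k : nat) :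
  consecutive_primes v M ->
  (forall i j, i < v -> j < v -> i <> j -> N < M i * M j) ->
  NoDup Omega -> (forall k', In k' Omega -> k' < N) -> length Omega <= s -> k < N ->
  length (Upsilon v M Omega k) <= s.
Proof.
  intros HM HMM Hnd Hr Hs Hk. unfold Upsilon.
  destruct (existsb (Nat.eqb k) Omega) eqn:Hex.
  - induction (seq 0 v) as [|a l IH]; simpl; auto; lia.
  - set (P := fun i => existsb (fun k' => Nat.eqb (k mod M i) (k' mod M i)) Omega).
    set (f := fun i => match find (fun k' => Nat.eqb (k mod M i) (k' mod M i)) Omega with Some k' => k' | None => 0 end).
    set (L := filter _ (seq 0 v)).
    assert (HL : forall i, In i L -> i < v /\ In (f i) Omega /\ k mod M i = f i mod M i).
    { intros i Hi. unfold L in Hi. apply filter_In in Hi. destruct Hi as [Hi Hp].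
      apply in_seq in Hi. simpl in Hp. apply existsb_exists in Hp. destruct Hp as [k0 [Hk0 Hk0']].
      unfold f. destruct (find (fun k' => Nat.eqb (k mod M i) (k' mod M i)) Omega) eqn:Hf.
      - apply find_some in Hf. destruct Hf as [Hf1 Hf2]. apply Nat.eqb_eq in Hf2. repeat split; auto; lia.
      - exfalso. rewrite (find_none _ _ Hf k0 Hk0) in Hk0'. discriminate. }
    assert (Hlen : length (map f L) <= length Omega).
    { apply NoDup_incl_length.
      - apply NoDup_map_NoDup_ForallPairs.
        + intros i j Hi Hj Hfij. destruct (HL i Hi) as [Hiv [Hio Him]]. destruct (HL j Hj) as [Hjv [Hjo Hjm]].
          destruct (Nat.eq_dec i j); auto. exfalso.
          assert (Hneq : M i <> M j).
          { destruct (Nat.lt_total i j) as [Hl|[Hl|Hl]]; try lia.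
            - pose proof (M_incr v M HM i j ltac:(lia)). lia.
            - pose proof (M_incr v M HM j i ltac:(lia)). lia. }
          assert (Hkf : k = f i).
          { apply (crt (M i) (M j) k (f i) N); auto.
            - apply (proj1 HM); auto.
            - apply (proj1 HM); auto.
            - rewrite Hfij; auto. }
          assert (existsb (Nat.eqb k) Omega = true).
          { apply existsb_exists. exists (f i). split; auto. apply Nat.eqb_eq; auto. }
          congruence.
        + unfold L. apply NoDup_filter, seq_NoDup.
      - intros x Hx. apply in_map_iff in Hx. destruct Hx as [i [Hi1 Hi2]]. subst. apply HL; auto. }
    rewrite length_map in Hlen. lia.
Qed.

Close Scope nat_scope.
Open Scope R_scope.

Lemma marcum_val m' mu lam : 0 <= mu -> 0 < lam -> marcumQ (S m') (sqrt mu) (sqrt lam) = Sfun m' mu lam.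
Proof.
  intros Hmu Hl. destruct (Rle_lt_or_eq_dec 0 mu Hmu) as [H|H].
  - apply marcum_pos; auto.
  - subst mu. apply marcum_0; auto.
Qed.

Theorem theorem1
  (N J v s : nat) (M : nat -> nat) (gamma : nat -> nat -> R)
  (Omega : list nat) (k : nat) (lam : R)
  (HN : (0 < N)%nat) (HJ : (0 < J)%nat) (Hv : (0 < v)%nat)
  (HM : consecutive_primes v M)
  (HMM : forall i j, (i < v)%nat -> (j < v)%nat -> i <> j -> (N < M i * M j)%nat)
  (HOmega_nodup : NoDup Omega)
  (HOmega_range : forall k', In k' Omega -> (k' < N)%nat)
  (Hsparse : (length Omega <= s)%nat)
  (Hk : (k < N)%nat)
  (Hgamma : forall i, (i < v)%nat -> 0 <= gamma i k)
  (Hlam : 0 < lam) :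
  let Ups_k := Upsilon v M Omega k in
  let Pf := chi2_tail (J * v) (2 / INR N * sumR (fun i => INR (M i) * gamma i k) Ups_k) lam in
  (length Ups_k <= s)%nat /\
  (forall Ups : list nat,
     NoDup Ups -> (forall i, In i Ups -> (i < v)%nat) -> length Ups = s ->
     incl Ups_k Ups ->
     upper_gamma (J * v) (lam / 2) / Gamma_fn (J * v) <= Pf /\
     Pf <= marcumQ (J * v)
             (sqrt (2 / INR N * sumR (fun i => INR (M i) * gamma i k) Ups)) (sqrt lam)) /\
  (forall mu : R,
     2 / INR N * sumR (fun i => INR (M i) * gamma i k) (seq 0 v) <= mu ->
     marcumQ (J * v)
       (sqrt (2 / INR N * sumR (fun i => INR (M i) * gamma i k) (seq 0 v))) (sqrt lam)
     <= chi2_tail (J * v) mu lam).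
Proof.
  intros Ups_k Pf. unfold Pf; clear Pf.
  assert (Hm : (J * v = S (J * v - 1))%nat) by nia.
  set (m' := (J * v - 1)%nat) in Hm. rewrite Hm.
  set (F := fun i => INR (M i) * gamma i k).
  assert (HNp : 0 < 2 / INR N) by (apply Rdiv_lt_0_compat; [lra| apply lt_0_INR; auto]).
  assert (Hpos : forall l, (forall i, In i l -> (i < v)%nat) -> 0 <= 2 / INR N * sumR F l).
  { intros l Hl. apply Rmult_le_pos; [lra|]. apply sumR_nonneg. intros i Hi. unfold F.
    apply Rmult_le_pos; [apply pos_INR| apply Hgamma; auto]. }
  assert (HUk : forall i, In i Ups_k -> (i < v)%nat).
  { intros i Hi. unfold Ups_k, Upsilon in Hi. apply filter_In in Hi. destruct Hi as [Hi _].
    apply in_seq in Hi. lia. }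
  split; [|split].
  - apply (ups_length N v s M Omega k); auto.
  - intros Ups Hnd HU Hlen Hinc.
    assert (Hk0 := Hpos Ups_k HUk). assert (HU0 := Hpos Ups HU).
    rewrite chi2_tail_val by auto.
    split.
    + unfold Gamma_fn. rewrite !upper_gamma_val by lra. rewrite EE_0.
      replace (INR (fact m') * EE (S m') (lam / 2) / (INR (fact m') * 1)) with (Sfun m' 0 lam).
      apply Sfun_mono; auto. lra. lra.
      rewrite Sfun_0 by lra. field. apply not_0_INR, fact_neq_0.
    + rewrite marcum_val by auto. apply Sfun_mono; [|lra]. split; auto.
      apply Rmult_le_compat_l; [lra|]. apply sumR_incl; auto.
      * unfold Ups_k, Upsilon. apply NoDup_filter, seq_NoDup.
      * intros i Hi. unfold F. apply Rmult_le_pos; [apply pos_INR| apply Hgamma; auto].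
  - intros mu Hmu.
    assert (H0 : 0 <= 2 / INR N * sumR F (seq 0 v)) by (apply Hpos; intros i Hi; apply in_seq in Hi; lia).
    rewrite marcum_val by auto. rewrite chi2_tail_val by lra. apply Sfun_mono; auto. lra.
Qed.
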